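(* In any convex resource theory, for any input state $\rho$ and output state $\rho'$, $H\big(\rho\,\big|\,V_{\mathcal F'}(\rho')^{-1}\big)\ge P(\rho\to\rho')\ge H\big(\rho\,\big|\,R^{\mathcal F'}_{\mathcal F'}(\rho')\big)$.
   Context: Finite dimensions; $\langle A,B\rangle=\mathrm{Tr}(AB)$; $A\le B$ means $B-A\ge0$; $\mathrm{id}$ is the identity operator. Input free set $\mathcal F$ and output free set $\mathcal F'$ are closed convex sets of density operators. $\mathrm{cone}(\mathcal F)=\{\lambda\sigma:\lambda\ge0,\sigma\in\mathcal F\}$, $A\le_{\mathcal F}B$ iff $B-A\in\mathrm{cone}(\mathcal F)$; $R^{\mathcal F}_{\max}(X\|Y)=\inf\{\lambda:X\le_{\mathcal F}\lambda Y\}$ ($\inf\emptyset=\infty$), $R^{\mathcal F}_{\mathcal F}(\rho)=\min_{\sigma\in\mathcal F}R^{\mathcal F}_{\max}(\rho\|\sigma)$. $V_{\mathcal F}(\rho)=\max_{\sigma\in\mathcal F}\langle\Pi_\rho,\sigma\rangle$ with $\Pi_\rho$ the projector onto $\operatorname{supp}\rho$; $0^{-1}=\infty$, $\infty^{-1}=0$. For $t\in\mathbb R_+\cup\{\infty\}$: $H(\rho\,|\,t)=\max\{\langle\rho,W\rangle:\ 0\le W\le Z\le\mathrm{id},\ \langle W,\rho\rangle=\langle Z,\rho\rangle,\ \langle W,\sigma\rangle\le\frac1t\langle Z,\sigma\rangle\ \forall\sigma\in\mathcal F\}$. $\mathbb O$: completely positive trace-non-increasing maps $\mathcal E$ such that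 for every $\sigma\in\mathcal F$ there exist $\sigma'\in\mathcal F'$ and $p\in[0,1]$ with $\mathcal E(\sigma)=p\sigma'$. $P(\rho\to\rho')=\max\{p:\ \mathcal E(\rho)=p\rho',\ \mathcal E\in\mathbb O\}$. *)

(* Defs.v *)
From HB Require Import structures.
From mathcomp Require Import all_boot all_order all_algebra.
From mathcomp Require Import all_classical all_reals all_analysis.
From mathcomp.real_closed Require Import complex.
Set Implicit Arguments. Unset Strict Implicit. Unset Printing Implicit Defensive.
Import Order.TTheory GRing.Theory Num.Theory.
Import numFieldNormedType.Exports.
Local Open Scope classical_set_scope.
Local Open Scope ring_scope.

Section QRT.
Variable R : realType.
Local Notation C := (R[i]).

Definition adjm (m n : nat) (A : 'M[C]_(m, n)) : 'M[C]_(n, m) :=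
  \matrix_(i, j) Num.conj (A j i).

(* A >= 0 : positive semidefinite (Hermitian, nonnegative quadratic form);
   0 <= z in C means z is real and nonnegative *)
Definition psd (n : nat) (A : 'M[C]_n) : Prop :=
  adjm A = A /\ forall v : 'cV[C]_n, 0 <= (adjm v *m A *m v) 0 0.

Definition loewner (n : nat) (A B : 'M[C]_n) : Prop := psd (B - A).

Definition density (n : nat) (A : 'M[C]_n) : Prop := psd A /\ \tr A = 1.

(* <A, B> = Tr(AB); all pairings used below are between Hermitian
   operators, hence real: we take the real part. *)
Definition ip (n : nat) (A B : 'M[C]_n) : R := complex.Re (\tr (A *m B)).

Definition free_set (n : nat) (F : set 'M[C]_n) : Prop :=
  (forall s, F s -> density s) /\
  (forall A B (t : R), F A -> F B -> 0 <= t <= 1 ->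
      F ((t%:C)%C *: A + ((1 - t)%:C)%C *: B)) /\
  closed (F : set 'M[(C : numFieldType) : topologicalType]_n).

Definition cone (n : nat) (F : set 'M[C]_n) : set 'M[C]_n :=
  [set X | exists l : R, 0 <= l /\ exists s, F s /\ X = (l%:C)%C *: s].

Definition leF (n : nat) (F : set 'M[C]_n) (A B : 'M[C]_n) : Prop := cone F (B - A).

(* R^F_max(X||Y) = inf { l : X <=_F l Y }  (inf of the empty set = +oo) *)
Definition Rmax (n : nat) (F : set 'M[C]_n) (X Y : 'M[C]_n) : \bar R :=
  ereal_inf [set (l%:E)%E | l in [set l : R | leF F X ((l%:C)%C *: Y)]].

Definition RFF (n : nat) (F : set 'M[C]_n) (rho : 'M[C]_n) : \bar R :=
  ereal_inf [set Rmax F rho s | s in F].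

(* P is the (orthogonal) projector onto supp rho = range rho *)
Definition supp_proj (n : nat) (rho P : 'M[C]_n) : Prop :=
  adjm P = P /\ P *m P = P /\ (P^T == rho^T)%MS.

Definition VF (n : nat) (F : set 'M[C]_n) (rho : 'M[C]_n) : \bar R :=
  ereal_sup [set x | exists P s, supp_proj rho P /\ F s /\ x = ((ip P s)%:E)%E].

Definition einv (x : \bar R) : \bar R :=
  match x with
  | EFin r => if r == 0 then +oo%E else ((r^-1)%:E)%E
  | +oo%E => 0%E
  | -oo%E => 0%E
  end.

Definition Hfun (n : nat) (F : set 'M[C]_n) (rho : 'M[C]_n) (t : \bar R) : \bar R :=
  ereal_sup [set ((ip rho W)%:E)%E | W in
    [set W | exists Z : 'M[C]_n,
       psd W /\ loewner W Z /\ loewner Z 1%:M /\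
       ip W rho = ip Z rho /\
       (forall s, F s -> ((ip W s)%:E <= einv t * (ip Z s)%:E)%E)]].

(* positivity of a k x k block operator sum_{ij} |i><j| (x) X i j on C^k (x) C^n *)
Definition blockpsd (k n : nat) (X : 'I_k -> 'I_k -> 'M[C]_n) : Prop :=
  (forall i j, X j i = adjm (X i j)) /\
  forall v : 'I_k -> 'cV[C]_n,
    0 <= \sum_(i < k) \sum_(j < k) (adjm (v i) *m X i j *m v j) 0 0.

(* complete positivity: id_k (x) E is positive for every k *)
Definition completely_positive (n m : nat) (E : 'M[C]_n -> 'M[C]_m) : Prop :=
  forall (k : nat) (X : 'I_k -> 'I_k -> 'M[C]_n),
    blockpsd X -> blockpsd (fun i j => E (X i j)).

Definition trace_nonincreasing (n m : nat) (E : 'M[C]_n -> 'M[C]_m) : Prop :=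
  forall A : 'M[C]_n, psd A -> \tr (E A) <= \tr A.

Definition free_ops (n m : nat) (F : set 'M[C]_n) (F' : set 'M[C]_m)
  : set {linear 'M[C]_n -> 'M[C]_m} :=
  [set E | completely_positive E /\ trace_nonincreasing E /\
     forall s, F s -> exists s' (p : R), F' s' /\ 0 <= p <= 1 /\ E s = (p%:C)%C *: s'].

Definition Ptrans (n m : nat) (F : set 'M[C]_n) (F' : set 'M[C]_m)
  (rho : 'M[C]_n) (rho' : 'M[C]_m) : \bar R :=
  ereal_sup [set (p%:E)%E | p in
    [set p : R | exists E, free_ops F F' E /\ E rho = (p%:C)%C *: rho']].

End QRT.

(* Main.v *)
Require Import Defs.
From HB Require Import structures.
From mathcomp Require Import all_boot all_order all_algebra.
From mathcomp Require Import all_classical all_reals all_analysis.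
From mathcomp Require Import ring lra.
From mathcomp.real_closed Require Import complex.
Import Order.TTheory GRing.Theory Num.Theory.
Local Open Scope classical_set_scope.
Local Open Scope ring_scope.
Set Implicit Arguments. Unset Strict Implicit. Unset Printing Implicit Defensive.

Section LA.
Variable R : realType.
Local Notation C := (R[i]).

Lemma adjmE m n (A : 'M[C]_(m, n)) i j : adjm A i j = Num.conj (A j i).
Proof. by rewrite /adjm mxE. Qed.

Lemma adjmK m n (A : 'M[C]_(m, n)) : adjm (adjm A) = A.
Proof. by apply/matrixP => i j; rewrite !adjmE conjCK. Qed.

Lemma adjmM m n p (A : 'M[C]_(m, n)) (B : 'M[C]_(n, p)) :
  adjm (A *m B) = adjm B *m adjm A.
Proof.
apply/matrixP => i j; rewrite adjmE !mxE rmorph_sum; apply: eq_bigr => k _.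
by rewrite !adjmE rmorphM mulrC.
Qed.

Lemma adjmD m n (A B : 'M[C]_(m, n)) : adjm (A + B) = adjm A + adjm B.
Proof. by apply/matrixP => i j; rewrite !mxE rmorphD. Qed.

Lemma adjmN m n (A : 'M[C]_(m, n)) : adjm (- A) = - adjm A.
Proof. by apply/matrixP => i j; rewrite !mxE rmorphN. Qed.

Lemma adjmB m n (A B : 'M[C]_(m, n)) : adjm (A - B) = adjm A - adjm B.
Proof. by rewrite adjmD adjmN. Qed.

Lemma adjmZ m n (a : C) (A : 'M[C]_(m, n)) : adjm (a *: A) = Num.conj a *: adjm A.
Proof. by apply/matrixP => i j; rewrite !mxE rmorphM. Qed.

Lemma adjm0 m n : adjm (0 : 'M[C]_(m, n)) = 0.
Proof. by apply/matrixP => i j; rewrite !mxE rmorph0. Qed.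

Lemma adjm1 n : adjm (1%:M : 'M[C]_n) = 1%:M.
Proof. by apply/matrixP => i j; rewrite !mxE eq_sym; case: eqP => _; rewrite ?rmorph1 ?rmorph0. Qed.

Lemma adjm_sum m n (I : finType) (F : I -> 'M[C]_(m, n)) :
  adjm (\sum_i F i) = \sum_i adjm (F i).
Proof.
apply/matrixP => i j; rewrite adjmE !summxE rmorph_sum; apply: eq_bigr => k _.
by rewrite adjmE.
Qed.

Definition B n (M : 'M[C]_n) (v w : 'cV[C]_n) : C := (adjm v *m M *m w) 0 0.

Lemma mx11M p (X : 'M[C]_(1, p)) (Y : 'M[C]_(p, 1)) (Z : 'M[C]_1) :
  (X *m Y *m Z) 0 0 = (X *m Y) 0 0 * Z 0 0.
Proof. by rewrite [in LHS]mxE big_ord1. Qed.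

Lemma mx11_tr p (X : 'M[C]_(1, p)) (Y : 'M[C]_(p, 1)) :
  (X *m Y) 0 0 = \tr (Y *m X).
Proof. by rewrite -mxtrace_mulC /mxtrace big_ord1. Qed.

Lemma B_tr n (M : 'M[C]_n) v w : B M v w = \tr (M *m (w *m adjm v)).
Proof. by rewrite /B -mulmxA mx11_tr mulmxA. Qed.

Lemma conj_mx11 p q (X : 'M[C]_(1, p)) (Y : 'M[C]_(p, q)) (Z : 'M[C]_(q, 1)) :
  Num.conj ((X *m Y *m Z) 0 0) = (adjm Z *m adjm Y *m adjm X) 0 0.
Proof. by rewrite -adjmE !adjmM mulmxA. Qed.

Lemma B_conj n (M : 'M[C]_n) v w : Num.conj (B M v w) = B (adjm M) w v.
Proof. by rewrite /B conj_mx11 adjmK. Qed.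

Lemma BDl n (M : 'M[C]_n) v1 v2 w : B M (v1 + v2) w = B M v1 w + B M v2 w.
Proof. by rewrite /B adjmD !mulmxDl mxE. Qed.

Lemma BDr n (M : 'M[C]_n) v w1 w2 : B M v (w1 + w2) = B M v w1 + B M v w2.
Proof. by rewrite /B !mulmxDr mxE. Qed.

Lemma BZl n (M : 'M[C]_n) a v w : B M (a *: v) w = Num.conj a * B M v w.
Proof. by rewrite /B adjmZ -!scalemxAl mxE. Qed.

Lemma BZr n (M : 'M[C]_n) a v w : B M v (a *: w) = a * B M v w.
Proof. by rewrite /B -!scalemxAr mxE. Qed.

Lemma BDm n (M N : 'M[C]_n) v w : B (M + N) v w = B M v w + B N v w.
Proof. by rewrite /B mulmxDr mulmxDl mxE. Qed.

Lemma BZm n (M : 'M[C]_n) a v w : B (a *: M) v w = a * B M v w.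
Proof. by rewrite /B -scalemxAr -scalemxAl mxE. Qed.

Lemma BNm n (M : 'M[C]_n) v w : B (- M) v w = - B M v w.
Proof. by rewrite /B mulmxN mulNmx mxE. Qed.

Lemma Bsum n (I : finType) (F : I -> 'M[C]_n) v w :
  B (\sum_i F i) v w = \sum_i B (F i) v w.
Proof.
rewrite /B mulmx_sumr mulmx_suml summxE; apply: eq_bigr => i _.
by [].
Qed.

Definition ev n (a : 'I_n) : 'cV[C]_n := delta_mx a 0.

Lemma B_ev n (M : 'M[C]_n) a b : B M (ev a) (ev b) = M a b.
Proof.
rewrite /B /ev.
have -> : adjm (delta_mx a 0 : 'cV[C]_n) = delta_mx 0 a.
  apply/matrixP => i j; rewrite !mxE (ord1 i) eqxx !andbT (eq_sym j).
  by case: (a == j); rewrite /= ?rmorph1 ?rmorph0.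
by rewrite -rowE -colE !mxE.
Qed.

Lemma B_rank1 n (u v w : 'cV[C]_n) :
  B (u *m adjm u) v w = Num.conj ((adjm u *m v) 0 0) * (adjm u *m w) 0 0.
Proof.
rewrite /B !mulmxA -(mulmxA (adjm v *m u)) [in LHS]mxE big_ord1; congr (_ * _).
by rewrite -adjmE adjmM adjmK.
Qed.


Import Num.Def.

Lemma psdP n (A : 'M[C]_n) : psd A <-> adjm A = A /\ forall v, 0 <= B A v v.
Proof. by []. Qed.

Lemma ge0_conj (z : C) : 0 <= z -> z^* = z.
Proof. by move=> /ger0_real /conj_Creal. Qed.

Lemma B_exp n (M : 'M[C]_n) a b (x : C) :
  B M (ev a + x *: ev b) (ev a + x *: ev b) =
  M a a + x * M a b + x^* * M b a + x^* * x * M b b.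
Proof.
by rewrite !(BDl, BDr, BZl, BZr) !B_ev mulrA !addrA (addrAC (M a a)).
Qed.

Lemma form_psd n (A : 'M[C]_n) : (forall v, 0 <= B A v v) -> psd A.
Proof.
move=> H; split=> //; apply/matrixP => a b; rewrite adjmE.
have ra : (A a a)^* = A a a by apply: ge0_conj; rewrite -B_ev; apply: H.
have rb : (A b b)^* = A b b by apply: ge0_conj; rewrite -B_ev; apply: H.
have hx x : (A a a + x * A a b + x^* * A b a + x^* * x * A b b)^* =
            A a a + x * A a b + x^* * A b a + x^* * x * A b b.
  by rewrite -B_exp; apply: ge0_conj; apply: H.
have e1 := hx 1; have e2 := hx 'i.
move: e1; rewrite !rmorphD /= !rmorphM /= ra rb conjCK rmorph1 /= !mul1r.
rewrite -!addrA => /addrI; rewrite !addrA => /addIr e1.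
move: e2; rewrite !rmorphD /= !rmorphM /= ra rb conjCK conjCi !mulrN !mulNr ?opprK.
rewrite -!addrA => /addrI; rewrite !addrA => /addIr e2.
move: e1 e2 (@mulCii _ : 'i * 'i = -1 :> C).
move: (A a b) (A b a) ('i : C) => p q j e1 e2 jj.
have e3 : conjC p - conjC q = - p + q.
  move: (congr1 (fun t => j * t) e2) => /=.
  rewrite !mulrDr !mulrN !mulrA jj !mulN1r ?opprK => ->.
  by [].
have -> : conjC q = ((conjC p + conjC q) - (conjC p - conjC q)) / 2%:R.
  by field.
rewrite e1 e3; by field.
Qed.

Local Open Scope sesquilinear_scope.
Lemma adjm_tc m n (X : 'M[C]_(m, n)) : adjm X = X ^t* .
Proof. by apply/matrixP => i j; rewrite !mxE. Qed.
Local Close Scope sesquilinear_scope.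

Lemma ev_adjm n (k : 'I_n) : ev k *m adjm (ev k) = delta_mx k k.
Proof.
have -> : adjm (ev k) = delta_mx 0 k.
  apply/matrixP => i j; rewrite !mxE (ord1 i) eqxx !andbT (eq_sym j).
  by case: (k == j); rewrite /= ?rmorph1 ?rmorph0.
by rewrite mul_delta_mx.
Qed.

Lemma psd_decomp n (A : 'M[C]_n) : psd A ->
  exists (d : 'I_n -> C) (u : 'I_n -> 'cV[C]_n),
    (forall k, 0 <= d k) /\ A = \sum_k d k *: (u k *m adjm (u k)).
Proof.
move=> [hA hq].
have nA : A \is normalmx by apply/normalmxP; rewrite -adjm_tc hA.
have /orthomx_spectralP eqA := nA.
set P := spectralmx A in eqA; set D := spectral_diag A in eqA.
have uP : P \is unitarymx by apply: spectral_unitarymx.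
have PP : P *m adjm P = 1%:M by rewrite adjm_tc; apply/unitarymxP.
rewrite invmx_unitary // -adjm_tc in eqA.
have decomp : A = \sum_k D 0 k *: ((adjm P *m ev k) *m adjm (adjm P *m ev k)).
  rewrite {1}eqA diag_mx_sum_delta mulmx_sumr mulmx_suml; apply: eq_bigr => k _.
  rewrite adjmM adjmK !mulmxA -(mulmxA _ (ev k)) ev_adjm.
  by rewrite -scalemxAr -scalemxAl.
exists (fun k => D 0 k), (fun k => adjm P *m ev k); split => //.
move=> k; have := hq (adjm P *m ev k).
rewrite adjmM adjmK {1}eqA !mulmxA -(mulmxA _ P (adjm P)) PP mulmx1.
rewrite -(mulmxA (adjm (ev k)) P (adjm P)) PP mulmx1.
by rewrite -[(_ *m _ *m _) 0 0]/(B _ _ _) B_ev mxE eqxx mulr1n.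
Qed.

Lemma psd_tr_ge0 n (A M : 'M[C]_n) : psd A -> psd M -> 0 <= \tr (A *m M).
Proof.
move=> /psd_decomp [d [u [hd ->]]] [_ hM].
rewrite mulmx_suml raddf_sum /=; apply: sumr_ge0 => k _.
rewrite -scalemxAl mxtraceZ; apply: mulr_ge0 => //.
by rewrite mxtrace_mulC -B_tr; apply: hM.
Qed.


Lemma cReC (x : R) : complex.Re (x%:C)%C = x. Proof. by []. Qed.
Lemma cReD (x y : C) : complex.Re (x + y) = complex.Re x + complex.Re y.
Proof. by case: x; case: y. Qed.
Lemma cReN (x : C) : complex.Re (- x) = - complex.Re x.
Proof. by case: x. Qed.
Lemma cReB (x y : C) : complex.Re (x - y) = complex.Re x - complex.Re y.
Proof. by rewrite cReD cReN. Qed.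
Lemma cReMr (x : R) (z : C) : complex.Re ((x%:C)%C * z) = x * complex.Re z.
Proof. by case: z => a b /=; rewrite mul0r subr0. Qed.
Lemma cge0_ReE (z : C) : 0 <= z -> z = ((complex.Re z)%:C)%C.
Proof. by move=> h; have := ger0_Im h; case: z h => a b /= _ ->. Qed.
Lemma cge0_Re (z : C) : 0 <= z -> 0 <= complex.Re z.
Proof. by move=> h; have := h; rewrite {1}(cge0_ReE h) ler0c. Qed.
Lemma cle_Re (x y : C) : x <= y -> complex.Re x <= complex.Re y.
Proof. by rewrite lecE => /andP[]. Qed.
Lemma RC_add (x y : R) : ((x + y)%:C)%C = (x%:C)%C + (y%:C)%C :> C.
Proof. by apply/eqP; rewrite eq_complex /= addr0 !eqxx. Qed.
Lemma RC_mul (x y : R) : ((x * y)%:C)%C = (x%:C)%C * (y%:C)%C :> C.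
Proof. by apply/eqP; rewrite eq_complex /= !mulr0 !mul0r subr0 addr0 !eqxx. Qed.
Lemma RC_opp (x : R) : ((- x)%:C)%C = - (x%:C)%C :> C.
Proof. by apply/eqP; rewrite eq_complex /= oppr0 !eqxx. Qed.
Lemma RC_conj (x : R) : ((x%:C)%C : C)^* = (x%:C)%C.
Proof. by apply/eqP; rewrite eq_complex /= oppr0 !eqxx. Qed.
Lemma RC1 : ((1 : R)%:C)%C = 1 :> C. Proof. by []. Qed.
Lemma RC0 : ((0 : R)%:C)%C = 0 :> C. Proof. by []. Qed.

Lemma gram_ge0 p (w : 'cV[C]_p) : 0 <= (adjm w *m w) 0 0.
Proof.
rewrite mxE; apply: sumr_ge0 => i _; rewrite adjmE mulrC; exact: mul_conjC_ge0.
Qed.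

Lemma psd_gram n p (M : 'M[C]_(n, p)) : psd (M *m adjm M).
Proof.
split; first by rewrite adjmM adjmK.
move=> v; rewrite mulmxA -(mulmxA (adjm v *m M)).
have -> : adjm v *m M = adjm (adjm M *m v) by rewrite adjmM adjmK.
exact: gram_ge0.
Qed.

Lemma psd0 n : psd (0 : 'M[C]_n).
Proof. by split; [rewrite adjm0 | move=> v; rewrite mulmx0 mul0mx mxE]. Qed.

Lemma psdD n (A M : 'M[C]_n) : psd A -> psd M -> psd (A + M).
Proof.
move=> [hA qA] [hM qM]; split; first by rewrite adjmD hA hM.
by move=> v; rewrite -[(_ *m _ *m _) 0 0]/(B _ _ _) BDm; apply: addr_ge0; [apply: qA | apply: qM].
Qed.

Lemma psdZ n (a : C) (A : 'M[C]_n) : 0 <= a -> psd A -> psd (a *: A).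
Proof.
move=> ha [hA qA]; split; first by rewrite adjmZ hA ge0_conj.
by move=> v; rewrite -[(_ *m _ *m _) 0 0]/(B _ _ _) BZm; apply: mulr_ge0 => //; apply: qA.
Qed.

Lemma psd_tr_real n (A M : 'M[C]_n) : psd A -> psd M ->
  \tr (A *m M) = ((ip A M)%:C)%C /\ 0 <= ip A M.
Proof.
move=> hA hM; have h := psd_tr_ge0 hA hM; split; first exact: cge0_ReE.
exact: cge0_Re.
Qed.

Lemma psd1 n : psd (1%:M : 'M[C]_n).
Proof. by have := psd_gram (1%:M : 'M[C]_n); rewrite adjm1 mulmx1. Qed.

Lemma trace_psd_ge0 n (A : 'M[C]_n) : psd A -> 0 <= \tr A.
Proof. by move=> hA; rewrite -[A]mul1mx; apply: psd_tr_ge0 => //; apply: psd1. Qed.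

End LA.

Section Upper.
Variable R : realType.
Local Notation C := (R[i]).
Import Num.Def.

Section Dual.
Variables (n m : nat) (E : {linear 'M[C]_n -> 'M[C]_m}).

Definition Ed (Y : 'M[C]_m) : 'M[C]_n := \matrix_(a, b) \tr (Y *m E (delta_mx b a)).

Lemma Ed_dual Y X : \tr (Ed Y *m X) = \tr (Y *m E X).
Proof.
rewrite {2}(matrix_sum_delta X) linear_sum mulmx_sumr raddf_sum /=.
rewrite [LHS]/mxtrace (eq_bigr (fun i => \sum_j Ed Y i j * X j i)); last first.
  by move=> i _; rewrite mxE.
rewrite exchange_big /=; apply: eq_bigr => a _.
rewrite linear_sum mulmx_sumr raddf_sum /=; apply: eq_bigr => b _.
by rewrite linearZ /= -scalemxAr mxtraceZ /Ed mxE mulrC.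
Qed.

Lemma EdB Y1 Y2 : Ed (Y1 - Y2) = Ed Y1 - Ed Y2.
Proof. by apply/matrixP => a b; rewrite !mxE mulmxBl linearB. Qed.

Lemma E_psd : completely_positive E -> forall A, psd A -> psd (E A).
Proof.
move=> hCP A [hA qA].
have hb : blockpsd (fun (_ _ : 'I_1) => A).
  split=> // v; rewrite !big_ord1; exact: qA.
have [h1 h2] := hCP 1%N _ hb.
apply: form_psd => v; have := h2 (fun _ => v); by rewrite !big_ord1.
Qed.

Lemma Ed_psd : completely_positive E -> forall Y, psd Y -> psd (Ed Y).
Proof.
move=> hCP Y hY; apply: form_psd => v.
rewrite B_tr Ed_dual; apply: psd_tr_ge0 => //; apply: E_psd => //.
exact: psd_gram.
Qed.

Lemma Ed1_le : trace_nonincreasing E -> psd (1%:M - Ed 1%:M).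
Proof.
move=> hT; apply: form_psd => v.
rewrite BDm BNm !B_tr Ed_dual !mul1mx subr_ge0; apply: hT; exact: psd_gram.
Qed.

End Dual.

Lemma einv2 (v : R) : einv (einv (v%:E)%E) = (v%:E)%E.
Proof.
rewrite /einv; case: (v =P 0) => [->|hv] //=.
by rewrite invr_eq0; case: eqP => //= _; rewrite invrK.
Qed.

Lemma einv2y : einv (einv (+oo)%E) = (+oo)%E :> \bar R.
Proof. by rewrite /einv /= eqxx. Qed.
Lemma einv2Ny : einv (einv (-oo)%E) = (+oo)%E :> \bar R.
Proof. by rewrite /einv /= eqxx. Qed.

Lemma le_yE (q : R) : 0 <= q -> ((q%:E)%E <= (+oo)%E * (q%:E)%E)%E.
Proof.
rewrite le_eqVlt => /orP[/eqP <-|hq]; first by rewrite mule0.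
by rewrite gt0_mulye ?lte_fin // leey.
Qed.

Lemma proj_fix m (rho P : 'M[C]_m) : supp_proj rho P -> P *m rho = rho.
Proof.
move=> [_ [PP /andP[_ /submxP [D hD]]]].
have -> : rho = P *m D^T by rewrite -[rho]trmxK hD trmx_mul trmxK.
by rewrite mulmxA PP.
Qed.

Lemma proj_psd m (rho P : 'M[C]_m) : supp_proj rho P -> psd P /\ psd (1%:M - P).
Proof.
move=> [hP [PP _]]; split.
  by have := psd_gram P; rewrite hP PP.
have := psd_gram (1%:M - P); rewrite adjmB adjm1 hP.
by rewrite mulmxBl mul1mx mulmxBr mulmx1 PP subrr subr0.
Qed.

Lemma upper_bound n m (F : set 'M[C]_n) (F' : set 'M[C]_m) rho rho' :
  (forall s, F' s -> density s) -> density rho' ->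
  (Ptrans F F' rho rho' <= Hfun F rho (einv (VF F' rho')))%E.
Proof.
move=> hF'd [hr' tr1].
apply: ge_ereal_sup => _ [p [E [[hCP [hT hfree]] hEr]] <-].
set Z := Ed E 1%:M.
have trrho Y : \tr (Ed E Y *m rho) = (p%:C)%C * \tr (Y *m rho').
  by rewrite Ed_dual hEr -scalemxAr mxtraceZ.
have trs s : F s -> exists s' q, F' s' /\ 0 <= q <= 1 /\
    forall Y, \tr (Ed E Y *m s) = (q%:C)%C * \tr (Y *m s').
  move=> /hfree [s' [q [hs' [hq hEs]]]]; exists s', q; split=> //; split=> // Y.
  by rewrite Ed_dual hEs -scalemxAr mxtraceZ.
have ipZrho : ip Z rho = p by rewrite /ip trrho mul1mx tr1 mulr1.
have ipZs s : F s -> exists s' q, F' s' /\ 0 <= q <= 1 /\ ip Z s = q /\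
    forall Y, ip (Ed E Y) s = q * ip Y s'.
  move=> /trs [s' [q [hs' [hq hY]]]]; exists s', q; split=> //; split=> //.
  split; first by rewrite /ip hY mul1mx cReMr (proj2 (hF'd _ hs')) mulr1.
  by move=> Y; rewrite /ip hY cReMr.
have key W : psd W -> psd (Z - W) -> ip W rho = p -> ip rho W = p ->
    (forall s, F s -> ((ip W s)%:E <= einv (einv (VF F' rho')) * (ip Z s)%:E)%E) ->
    ((p%:E)%E <= Hfun F rho (einv (VF F' rho')))%E.
  move=> hW hZW hWr hrW hc; apply: ereal_sup_ge; exists (ip rho W)%:E; last by rewrite hrW.
  exists W => //; exists Z; split=> //; split=> //; split; first exact: Ed1_le.
  by split=> //; rewrite hWr ipZrho.
have psdZ : psd Z by apply: Ed_psd => //; exact: psd1.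
have hZZ : forall s, F s -> ((ip Z s)%:E <= (+oo)%E * (ip Z s)%:E)%E.
  move=> s /ipZs [s' [q [_ [/andP[q0 _] [-> _]]]]]; exact: le_yE.
have ipZZ : ip rho Z = p by rewrite /ip mxtrace_mulC.
case hV: (VF F' rho') => [v | |]; rewrite hV in key; last 2 first.
- apply: key; [exact: psdZ | rewrite subrr; exact: psd0 | exact: ipZrho | exact: ipZZ | rewrite einv2y; exact: hZZ].
- apply: key; [exact: psdZ | rewrite subrr; exact: psd0 | exact: ipZrho | exact: ipZZ | rewrite einv2Ny; exact: hZZ].
have [[x [Pi [s0 [hPi [hs0 _]]]]] | hne] :=
  pselect (exists x, exists P s, supp_proj rho' P /\ F' s /\ x = ((ip P s)%:E)%E); last first.
  exfalso; move: hV; rewrite /VF.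
  have -> : [set x | exists P s, supp_proj rho' P /\ F' s /\ x = ((ip P s)%:E)%E] = set0.
    by apply/seteqP; split => // x hx; apply: hne; exists x.
  by rewrite ereal_sup0.
have [psdPi psdPi'] := proj_psd hPi.
have hfix := proj_fix hPi.
apply: (key (Ed E Pi)).
- exact: Ed_psd.
- by rewrite /Z -EdB; apply: Ed_psd.
- by rewrite /ip trrho hfix tr1 mulr1.
- by rewrite /ip mxtrace_mulC trrho hfix tr1 mulr1.
move=> s /ipZs [s' [q [hs' [/andP[q0 q1] [-> hY]]]]].
rewrite einv2 hY -EFinM lee_fin mulrC; apply: ler_wpM2r => //.
rewrite -lee_fin -hV; apply: ereal_sup_ubound.
by exists Pi, s'.
Qed.

End Upper.

Section Lower.
Variable R : realType.
Local Notation C := (R[i]).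
Import Num.Def.

Lemma psd_decomp2 n (A : 'M[C]_n) : psd A ->
  exists u : 'I_n -> 'cV[C]_n, A = \sum_k u k *m adjm (u k).
Proof.
move=> /psd_decomp [d [u [hd ->]]].
exists (fun k => sqrtC (d k) *: u k); apply: eq_bigr => k _.
rewrite adjmZ -scalemxAl -scalemxAr scalerA.
by rewrite ge0_conj ?sqrtC_ge0 // -expr2 sqrtCK.
Qed.

Lemma conj_tr n (A : 'M[C]_n) : (\tr A)^* = \tr (adjm A).
Proof. by rewrite /mxtrace rmorph_sum; apply: eq_bigr => i _; rewrite adjmE. Qed.

Lemma tr_decomp n (W X : 'M[C]_n) (w : 'I_n -> 'cV[C]_n) :
  W = \sum_k w k *m adjm (w k) -> \tr (W *m X) = \sum_k B X (w k) (w k).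
Proof.
move=> ->; rewrite mulmx_suml raddf_sum; apply: eq_bigr => k _.
by rewrite /= mxtrace_mulC B_tr.
Qed.

Lemma G_ge0 n k (W : 'M[C]_n) (X : 'I_k -> 'I_k -> 'M[C]_n) (a : 'I_k -> C) :
  psd W -> blockpsd X -> 0 <= \sum_i \sum_j (a i)^* * a j * \tr (W *m X i j).
Proof.
move=> /psd_decomp2 [w hw] [_ hX].
have -> : \sum_i \sum_j (a i)^* * a j * \tr (W *m X i j) =
   \sum_l \sum_i \sum_j B (X i j) (a i *: w l) (a j *: w l).
  rewrite [RHS]exchange_big; apply: eq_bigr => i _.
  rewrite [RHS]exchange_big; apply: eq_bigr => j _.
  rewrite (tr_decomp _ hw) mulr_sumr; apply: eq_bigr => l _.
  by rewrite BZl BZr mulrA.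
by apply: sumr_ge0 => l _; apply: hX.
Qed.

Lemma key_cp n m k (W : 'M[C]_n) (r : 'M[C]_m) (X : 'I_k -> 'I_k -> 'M[C]_n)
  (v : 'I_k -> 'cV[C]_m) :
  psd W -> psd r -> blockpsd X ->
  0 <= \sum_i \sum_j \tr (W *m X i j) * B r (v i) (v j).
Proof.
move=> hW /psd_decomp2 [u hu] hX.
have -> : \sum_i \sum_j \tr (W *m X i j) * B r (v i) (v j) =
  \sum_l \sum_i \sum_j ((adjm (u l) *m v i) 0 0)^* * (adjm (u l) *m v j) 0 0 *
     \tr (W *m X i j).
  rewrite [RHS]exchange_big; apply: eq_bigr => i _.
  rewrite [RHS]exchange_big; apply: eq_bigr => j _.
  rewrite hu Bsum mulr_sumr; apply: eq_bigr => l _.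
  by rewrite B_rank1 mulrC.
by apply: sumr_ge0 => l _; apply: G_ge0.
Qed.

Section MP.
Variables (n m : nat) (c : C) (W Y : 'M[C]_n) (r t : 'M[C]_m).

Definition mpf (X : 'M[C]_n) : 'M[C]_m := (c * \tr (W *m X)) *: r + \tr (Y *m X) *: t.

Lemma mpf_is_linear : linear_for *:%R mpf.
Proof.
move=> a X1 X2; rewrite /mpf !mulmxDr -!scalemxAr !mxtraceD !mxtraceZ.
by apply/matrixP => i j; rewrite !mxE; ring.
Qed.
HB.instance Definition _ := GRing.isLinear.Build C 'M[C]_n 'M[C]_m *:%R mpf mpf_is_linear.

Definition mpl : {linear 'M[C]_n -> 'M[C]_m} := mpf.

Hypotheses (hc : c^* = c) (hc0 : 0 <= c) (hW : psd W) (hY : psd Y) (hr : psd r) (ht : psd t).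

Lemma mpf_cp : completely_positive mpl.
Proof.
move=> k X hX; have [hXh hXq] := hX; split.
  move=> i j; change (mpf (X j i) = adjm (mpf (X i j))).
  rewrite /mpf adjmD !adjmZ (proj1 hr) (proj1 ht) rmorphM /=.
  by rewrite hc !conj_tr !adjmM (proj1 hW) (proj1 hY) -hXh (mxtrace_mulC (X j i) W) (mxtrace_mulC (X j i) Y).
move=> v; change (0 <= \sum_i \sum_j (adjm (v i) *m mpf (X i j) *m v j) 0 0).
have -> : \sum_i \sum_j (adjm (v i) *m mpf (X i j) *m v j) 0 0 =
   c * (\sum_i \sum_j \tr (W *m X i j) * B r (v i) (v j)) +
   \sum_i \sum_j \tr (Y *m X i j) * B t (v i) (v j).
  rewrite mulr_sumr -big_split; apply: eq_bigr => i _.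
  rewrite mulr_sumr -big_split; apply: eq_bigr => j _.
  by rewrite -[(_ *m _ *m _) 0 0]/(B _ _ _) /mpf BDm !BZm mulrA.
by apply: addr_ge0; [apply: mulr_ge0 => //|]; apply: key_cp.
Qed.

Lemma mpf_tni : c <= 1 -> \tr r = 1 -> \tr t = 1 -> psd (1%:M - W - Y) ->
  trace_nonincreasing mpl.
Proof.
move=> c1 tr1 tt1 h1 A hA /=; rewrite /mpf linearD !linearZ /= tr1 tt1 !mulr1.
have hz := psd_tr_ge0 h1 hA.
have hx := psd_tr_ge0 hW hA.
rewrite -subr_ge0.
have -> : \tr A - (c * \tr (W *m A) + \tr (Y *m A)) =
   \tr ((1%:M - W - Y) *m A) + (1 - c) * \tr (W *m A).
  rewrite !mulmxBl mul1mx !linearB /=; ring.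
by apply: addr_ge0 => //; apply: mulr_ge0; rewrite ?subr_ge0.
Qed.

End MP.

End Lower.

Import numFieldNormedType.Exports.

Section Lower2.
Variable R : realType.
Local Notation C := (R[i]).
Import Num.Def.

Lemma in_closed m (A : set 'M[C]_m) (x : 'M[C]_m) :
  closed (A : set 'M[(C : numFieldType) : topologicalType]_m) ->
  (forall e : R, 0 < e -> exists s, A s /\ forall i j, `|x i j - s i j| < (e%:C)%C) ->
  A x.
Proof.
move=> hcl happ; apply: hcl => U hU.
have [e e0 he] := (nbhs_ballP _ _).1 hU.
have e0' : 0 < complex.Re e by move: e0; rewrite /= ltcE => /andP[].
have eE : e = ((complex.Re e)%:C)%C.
  move: e0; rewrite /= ltcE => /andP[/eqP h _].
  by apply/eqP; rewrite eq_complex /= h !eqxx.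
have [s [hs hd]] := happ _ e0'.
exists s; split => //; apply: he.
split => // i j.
by rewrite -ball_normE /ball_ /= eE.
Qed.


Lemma conv_free m (F' : set 'M[C]_m) (hF' : free_set F') s tau (a b : R) :
  F' s -> F' tau -> 0 <= a -> 0 <= b -> a + b <= 1 ->
  exists s' q, F' s' /\ 0 <= q <= 1 /\
    (a%:C)%C *: s + (b%:C)%C *: tau = (q%:C)%C *: s'.
Proof.
move=> hs ht ha hb hab; have [_ [hconv _]] := hF'.
have [h0 | hq] := eqVneq (a + b) 0.
  have a0 : a = 0 by lra.
  have b0 : b = 0 by lra.
  exists s, 0; split => //; split; first by rewrite lexx ler01.
  by rewrite a0 b0 RC0 !scale0r addr0.
have qpos : 0 < a + b by rewrite lt_neqAle eq_sym hq addr_ge0.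
exists ((((a / (a + b))%:C)%C *: s + (((1 - a / (a + b))%:C)%C *: tau))), (a + b).
split; last split.
- apply: hconv => //; apply/andP; split; first by rewrite divr_ge0 // ltW.
  by rewrite ler_pdivrMr // mul1r lerDl.
- by rewrite (ltW qpos) hab.
rewrite scalerDr !scalerA -!RC_mul; congr (_ *: _ + _ *: _); congr (_%:C)%C.
  by field; rewrite hq.
by field; rewrite hq.
Qed.


Lemma diag_ge0 m (A : 'M[C]_m) k : psd A -> 0 <= A k k.
Proof. by move=> [_ hq]; rewrite -B_ev; apply: hq. Qed.

Lemma density_entry m (A : 'M[C]_m) i j : density A -> `|A i j| <= 1.
Proof.
move=> [hA tr1]; have [hh hq] := hA.
have dge k : 0 <= A k k by apply: diag_ge0.
have trE : \tr A = A i i + \sum_(k | k != i) A k k by rewrite /mxtrace (bigD1 i).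
have [->|hij] := eqVneq j i.
  rewrite ger0_norm // -tr1 trE lerDl; exact: sumr_ge0.
have hsum : A i i + A j j <= 1.
  rewrite -tr1 trE lerD2l (bigD1 j) //= lerDl; exact: sumr_ge0.
have hji : A j i = (A i j)^* by rewrite -{1}hh adjmE.
set z := A i j in hji *.
have [z0|hz] := eqVneq z 0; first by rewrite z0 normr0 ler01.
set nn := `|z|.
have nn0 : nn != 0 by rewrite normr_eq0.
have nnc : nn^* = nn by apply: ge0_conj; apply: normr_ge0.
have hzc : z^* = nn * nn / z.
  by rewrite /nn -expr2 normCK; field.
have nnge : 0 <= nn by apply: normr_ge0.
clearbody nn.
pose x := - (nn * nn / z) / nn.
have xc : x^* = - z / nn.
  rewrite /x !(rmorphM, rmorphN, fmorphV) /= ?(rmorphM, rmorphN, fmorphV) /= nnc hzc.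
  by field; rewrite ?(nn0, hz, mulf_neq0, invr_eq0).
have e1 : x * z = - nn.
  by rewrite /x; field; rewrite ?(nn0, hz, mulf_neq0, invr_eq0).
have e2 : x^* * z^* = - nn.
  by rewrite xc hzc; field; rewrite ?(nn0, hz, mulf_neq0, invr_eq0).
have e3 : x^* * x = 1.
  by rewrite xc /x; field; rewrite ?(nn0, hz, mulf_neq0, invr_eq0).
have hx : 0 <= B A (@ev R _ i + x *: @ev R _ j) (@ev R _ i + x *: @ev R _ j).
  by apply: hq.
rewrite B_exp -/z hji e1 e2 e3 mul1r in hx.
apply: (le_trans _ hsum).
have h2 : nn + nn <= A i i + A j j.
  rewrite -subr_ge0.
  by have -> : A i i + A j j - (nn + nn) = A i i + - nn + - nn + A j j by ring.
by apply: le_trans h2; rewrite lerDl.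
Qed.


Lemma LS_decomp m (F' : set 'M[C]_m) (hF' : free_set F') (rho' s : 'M[C]_m) l :
  density rho' -> F' s -> leF F' rho' (((l%:C)%C : C) *: s) ->
  1 <= l /\ exists tau, F' tau /\ rho' = ((l%:C)%C : C) *: s - (((l - 1)%:C)%C : C) *: tau.
Proof.
move=> [_ tr1] hs [l0 [hl0 [tau [htau he]]]].
have [_ trs] := hF'.1 _ hs; have [_ trt] := hF'.1 _ htau.
have hl : l0 = l - 1.
  move/(congr1 mxtrace): he; rewrite linearB !linearZ /= trs trt tr1 !mulr1 => h.
  by apply: complexI; rewrite RC_add RC_opp RC1 h.
split; first by rewrite -subr_ge0 -hl.
exists tau; split => //; rewrite -hl -he.
by rewrite opprB addrC subrK.
Qed.


Lemma lower_bound n m (F : set 'M[C]_n) (F' : set 'M[C]_m) rho rho' :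
  (forall s, F s -> density s) -> free_set F' -> F' !=set0 ->
  density rho -> density rho' ->
  (Hfun F rho (RFF F' rho') <= Ptrans F F' rho rho')%E.
Proof.
move=> hFd hF' [s0 hs0] [hrho trr] hr'd; have [hr' tr1] := hr'd.
have hF'd := hF'.1.
apply: ge_ereal_sup => _ [W [Z [hW [hWZ [hZ1 [hWZr hc]]]]] <-].
set Y := Z - W in hWZ.
have h1WY : psd (1%:M - W - Y) by rewrite /Y opprB addrA subrK.
have ZWY : Z = W + Y by rewrite /Y addrC subrK.
have trY : \tr (Y *m rho) = 0.
  have [-> _] := psd_tr_real hWZ hrho.
  by rewrite /ip /Y mulmxBl linearB /= cReB -/(ip Z rho) -/(ip W rho) hWZr subrr.
set p := ip W rho.
have hpr : ip rho W = p by rewrite /ip mxtrace_mulC.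
have [trW p0] := psd_tr_real hW hrho.
have hs sg : F sg -> [/\ \tr (W *m sg) = ((ip W sg)%:C)%C, \tr (Y *m sg) = ((ip Y sg)%:C)%C,
    0 <= ip W sg, 0 <= ip Y sg & ip W sg + ip Y sg <= 1 /\ ip Z sg = ip W sg + ip Y sg].
  move=> /hFd [hsg trs].
  have [h1 h2] := psd_tr_real hW hsg; have [h3 h4] := psd_tr_real hWZ hsg.
  split => //; split.
    have [_ h5] := psd_tr_real h1WY hsg.
    move: h5; rewrite /ip !mulmxBl mul1mx !linearB /= trs /= => h5.
    lra.
  by rewrite ZWY /ip mulmxDl linearD /= cReD.
have achieve (c : R) tau : 0 <= c <= 1 -> density tau ->
    (forall sg, F sg -> exists s' q, F' s' /\ 0 <= q <= 1 /\
        mpf ((c%:C)%C : C) W Y rho' tau sg = ((q%:C)%C : C) *: s') ->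
    (((c * p)%:E)%E <= Ptrans F F' rho rho')%E.
  move=> /andP[c0 c1] [htau trt] hfree.
  apply: ereal_sup_ge; exists ((c * p)%:E)%E => //; exists (c * p) => //.
  exists (mpl ((c%:C)%C : C) W Y rho' tau); split; last first.
    by change (mpf ((c%:C)%C : C) W Y rho' tau rho = ((c * p)%:C)%C *: rho');
      rewrite /mpf trW trY scale0r addr0 RC_mul.
  split; first by apply: mpf_cp => //; [exact: RC_conj | rewrite ler0c].
  split; first by apply: mpf_tni => //; rewrite -RC1 lecR.
  exact: hfree.
have RFF_ge1 : ((1%:E)%E <= RFF F' rho')%E.
  apply: le_ereal_inf_tmp => _ [s1 hs1 <-]; apply: le_ereal_inf_tmp => _ [l hl <-].
  by rewrite lee_fin; have [] := LS_decomp hF' hr'd hs1 hl.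
rewrite hpr.
have inf_case : (forall sg, F sg -> ip W sg = 0) -> (((p%:E)%E <= Ptrans F F' rho rho')%E).
  move=> ha.
  rewrite -[p]mul1r; apply: (achieve 1 s0) => //; [by rewrite ler01 lexx | exact: hF'd | ].
  move=> sg hsg; have [h1 h2 h3 h4 [h5 _]] := hs sg hsg.
  have hy1 : 0 + ip Y sg <= 1 by move: h5; rewrite (ha sg hsg).
  have [s' [q [hs' [hq he]]]] := conv_free hF' hs0 hs0 (lexx 0) h4 hy1.
  exists s', q; split => //; split => //; rewrite -he /mpf h1 h2 (ha sg hsg).
  have -> : ((0:R)%:C)%C = 0 :> C by [].
  by rewrite mulr0 !scale0r.
case hR: (RFF F' rho') => [r | |]; rewrite hR in hc RFF_ge1.
2,3: apply: inf_case => sg hsg; have [_ _ h0 _ _] := hs sg hsg; have := hc sg hsg;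
  by rewrite /einv /= mul0e lee_fin => h; apply/eqP; rewrite eq_le h h0.
have r1 : 1 <= r by rewrite -lee_fin.
have r0 : 0 < r by apply: lt_le_trans r1; rewrite ltr01.
have hcr sg : F sg -> ip W sg * (r - 1) <= ip Y sg.
  move=> hsg; have [_ _ h3 h4 [h5 hZ]] := hs sg hsg; have := hc sg hsg.
  rewrite /einv /= (negbTE (lt0r_neq0 r0)) hZ -EFinM lee_fin => h.
  have := ler_wpM2l (ltW r0) h; rewrite mulrA mulfV ?(lt0r_neq0 r0) // mul1r.
  move=> h'; nra.
have decomp (la : R) : r < la -> exists s1 l tau,
    [/\ F' s1, F' tau, r <= l, l < la &
     rho' = ((l%:C)%C : C) *: s1 - (((l - 1)%:C)%C : C) *: tau].
  move=> hla; have : (RFF F' rho' < (la%:E)%E)%E by rewrite hR lte_fin.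
  move=> /ereal_inf_lt [_ [s1 hs1 <-]] /ereal_inf_lt [_ [l hl <-]].
  rewrite lte_fin => hl2.
  have [_ [tau [htau hdec]]] := LS_decomp hF' hr'd hs1 hl.
  exists s1, l, tau; split => //.
  rewrite -lee_fin -hR; apply: le_trans (ereal_inf_lbound _) (ereal_inf_lbound _).
    by exists s1.
  by exists l.
have hfree_gen (c : R) s1 tau l sg : F sg -> F' s1 -> F' tau -> 0 <= c <= 1 ->
    c * (l - 1) = r - 1 -> 1 <= l ->
    rho' = ((l%:C)%C : C) *: s1 - (((l - 1)%:C)%C : C) *: tau ->
    exists s' q, F' s' /\ 0 <= q <= 1 /\
      mpf ((c%:C)%C : C) W Y rho' tau sg = ((q%:C)%C : C) *: s'.
  move=> hsg hs1 htau /andP[c0 c1] hcl l1 hdec.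
  have [h1 h2 h3 h4 [h5 _]] := hs sg hsg; have h6 := hcr sg hsg.
  have ha0 : 0 <= c * ip W sg * l by rewrite !mulr_ge0 // (le_trans ler01 l1).
  have hb0 : 0 <= ip Y sg - c * ip W sg * (l - 1).
    by rewrite -mulrA (mulrC (ip W sg)) mulrA hcl subr_ge0 mulrC.
  have hab : c * ip W sg * l + (ip Y sg - c * ip W sg * (l - 1)) <= 1.
    have -> : c * ip W sg * l + (ip Y sg - c * ip W sg * (l - 1)) = c * ip W sg + ip Y sg.
      by ring.
    apply: le_trans h5; rewrite lerD2r; exact: ler_piMl.
  have [s' [q [hs' [hq he]]]] := conv_free hF' hs1 htau ha0 hb0 hab.
  exists s', q; split => //; split => //; rewrite -he /mpf h1 h2 {1}hdec.
  apply/matrixP => i j; rewrite !mxE !(RC_add, RC_mul, RC_opp, RC1); ring.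
have [r1e|r1n] := eqVneq r 1.
  have hin : F' rho'.
    apply: (in_closed hF'.2.2) => e e0.
    have hla : r < 1 + e / 4%:R by rewrite r1e; lra.
    have [s1 [l [tau [hs1 htau hrl hl hdec]]]] := decomp _ hla.
    exists s1; split => // i j.
    have -> : rho' i j - s1 i j = (((l - 1)%:C)%C : C) * (s1 i j - tau i j).
      by rewrite hdec !mxE !(RC_add, RC_opp, RC1); ring.
    have l1 : 0 <= l - 1 by rewrite r1e in hrl; lra.
    rewrite normrM ger0_norm ?ler0c //.
    have hb : `|s1 i j - tau i j| <= ((1 + 1)%:C)%C.
      rewrite RC_add RC1; apply: le_trans (ler_normB _ _) _.
      by apply: lerD; apply: density_entry; apply: hF'd.
    apply: le_lt_trans (ler_wpM2l _ hb) _; first by rewrite ler0c.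
    by rewrite -RC_mul ltcR; rewrite r1e in hrl; lra.
  rewrite -[p]mul1r; apply: (achieve 1 rho') => //; first by rewrite ler01 lexx.
  move=> sg hsg; apply: (hfree_gen 1 rho' rho' 1) => //; first by rewrite ler01 lexx.
    by rewrite r1e !subrr mulr0.
  by rewrite subrr RC0 scale0r subr0 RC1 scale1r.
have r1' : 1 < r by rewrite lt_neqAle eq_sym r1n r1.
have key (la : R) : r < la -> ((((r - 1) / (la - 1) * p)%:E)%E <= Ptrans F F' rho rho')%E.
  move=> hla; have [s1 [l [tau [hs1 htau hrl hl hdec]]]] := decomp la hla.
  have l1 : 0 < l - 1 by lra.
  have c0 : 0 <= (r - 1) / (l - 1) by rewrite divr_ge0 //; lra.
  have c1 : (r - 1) / (l - 1) <= 1 by rewrite ler_pdivrMr // mul1r; lra.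
  apply: le_trans (achieve ((r - 1) / (l - 1)) tau _ _ _).
  - rewrite lee_fin; apply: ler_wpM2r => //; apply: ler_wpM2l; first lra.
    by rewrite lef_pV2 ?posrE; lra.
  - by rewrite c0 c1.
  - exact: hF'd.
  move=> sg hsg; apply: (hfree_gen _ s1 tau l) => //; first by rewrite c0 c1.
    by field; rewrite ?(gt_eqF l1).
  lra.
case hP: (Ptrans F F' rho rho') => [P0 | |]; rewrite hP in key.
- have hr1 : r < r + 1 by lra.
  have P0ge : 0 <= P0.
    have := key _ hr1; rewrite lee_fin; apply: le_trans.
    by apply: mulr_ge0 => //; apply: divr_ge0; lra.
  rewrite lee_fin leNgt; apply/negP => hlt.
  pose mid := (p + P0) / 2%:R.
  have mid0 : 0 < mid by rewrite /mid; lra.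
  have hmp : mid < p by rewrite /mid; lra.
  have hla : r < 1 + (r - 1) * p / mid.
    rewrite -subr_gt0.
    have -> : 1 + (r - 1) * p / mid - r = (r - 1) * (p - mid) / mid.
      by field; rewrite gt_eqF.
    by rewrite divr_gt0 // mulr_gt0 //; lra.
  have := key _ hla; rewrite lee_fin.
  have alg (x y z : R) : 0 < x -> 0 < y -> 0 < z -> x / (1 + x * y / z - 1) * y = z.
    move=> hx hy hz; field.
    have -> : z + x * y + -1 * z = x * y by ring.
    by rewrite !gt_eqF // mulr_gt0.
  rewrite alg; [|lra|lra|lra].
  rewrite /mid; lra.
- exact: leey.
- have hr1 : r < r + 1 by lra.
  by have := key _ hr1; rewrite leeNy_eq.
Qed.

End Lower2.

Theorem theorem7 (R : realType) (n m : nat)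
  (F : set 'M[R[i]]_n) (F' : set 'M[R[i]]_m)
  (hF : free_set F) (hF' : free_set F') (hF'0 : F' !=set0)
  (rho : 'M[R[i]]_n) (rho' : 'M[R[i]]_m)
  (hrho : density rho) (hrho' : density rho') :
  (Ptrans F F' rho rho' <= Hfun F rho (einv (VF F' rho')))%E /\
  (Hfun F rho (RFF F' rho') <= Ptrans F F' rho rho')%E.
Proof.
split; first exact: (upper_bound _ _ (proj1 hF') hrho').
exact: (lower_bound (proj1 hF) hF' hF'0 hrho hrho').
Qed.
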